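(* Let $G$ be a co-chordal simple graph with at least one edge, whose vertices are among the variables of $S=\mathbb{K}[x_1,\dots,x_n]$, $\mathbb{K}$ a field. Then $\operatorname{sreg}(S/I(G))\le 1$.
   Context: A graph is chordal if every induced cycle has length 3, and co-chordal if its complement graph is chordal. $I(G)=(xy : \{x,y\}\in E(G))$ is the edge ideal. Stanley regularity: for a squarefree monomial ideal $I\subset S$, a squarefree Stanley decomposition of $S/I$ is a decomposition $S/I=\bigoplus_{i=1}^r u_i\mathbb{K}[Z_i]$ as $\mathbb{K}$-vector spaces, where $Z_i\subseteq\{x_1,\dots,x_n\}$, $u_i$ are (images of) squarefree monomials with $\operatorname{supp}(u_i)\subseteq Z_i$, and each $u_i\mathbb{K}[Z_i]$ is free over $\mathbb{K}[Z_i]$. Its Stanley regularity is $\max_i\deg(u_i)$, and $\operatorname{sreg}(S/I)$ is the minimum over all such decompositions. *)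

(* Defs.v *)
From HB Require Import structures.
From mathcomp Require Import all_boot all_order all_algebra.
From mathcomp Require Import mpoly.
Set Implicit Arguments. Unset Strict Implicit. Unset Printing Implicit Defensive.
Import GRing.Theory.
Local Open Scope ring_scope.

(* ---------- Graphs: a simple graph on the variables x_0..x_{n-1} is a
   symmetric irreflexive relation on 'I_n. ---------- *)
Definition simple_graph (T : finType) (e : rel T) :=
  ssrbool.symmetric e /\ ssrbool.irreflexive e.

Definition compl_graph (T : finType) (e : rel T) : rel T :=
  fun x y => (x != y) && ~~ e x y.

Definition induced_cycle (T : finType) (e : rel T) (s : seq T) :=
  [/\ uniq s, 3 <= size s &
   forall x0 i j, i < size s -> j < size s -> i != j ->
     e (nth x0 s i) (nth x0 s j) =
       ((j == i.+1 %% size s) || (i == j.+1 %% size s))]%N.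

Definition chordal (T : finType) (e : rel T) :=
  forall s : seq T, induced_cycle e s -> size s = 3%N.

Definition cochordal (T : finType) (e : rel T) := chordal (compl_graph e).

Definition in_edge_ideal (K : fieldType) (n : nat) (e : rel 'I_n)
    (p : {mpoly K[n]}) : Prop :=
  exists s : seq ('I_n * 'I_n * {mpoly K[n]}),
    all (fun t => e t.1.1 t.1.2) s /\
    p = \sum_(t <- s) t.2 * ('X_t.1.1 * 'X_t.1.2).

Definition mon_supp (n : nat) (m : 'X_{1..n}) : {set 'I_n} :=
  [set i | (m i != 0)%N].

Definition squarefree_mon (n : nat) (m : 'X_{1..n}) :=
  [forall i, (m i <= 1)%N].

Definition in_subring (K : fieldType) (n : nat) (Z : {set 'I_n})
    (p : {mpoly K[n]}) :=
  all (fun m => mon_supp m \subset Z) (msupp p).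

(* ---------- Squarefree Stanley decompositions of S/I(G) ----------
   A decomposition is given by r pairs D i = (u_i, Z_i).  It is a squarefree
   Stanley decomposition of S/I when
   - each u_i is a squarefree monomial with supp(u_i) ⊆ Z_i;
   - each u_i K[Z_i] (image in S/I) is free over K[Z_i], i.e.
     f ∈ K[Z_i] and u_i f ∈ I imply f = 0;
   - S/I = sum of the images of the u_i K[Z_i] (spanning);
   - the sum is direct: if sum_i u_i f_i ∈ I with f_i ∈ K[Z_i] then every
     u_i f_i ∈ I (i.e. is 0 in S/I). *)
Definition sqfree_stanley_decomp (K : fieldType) (n : nat) (e : rel 'I_n)
    (r : nat) (D : 'I_r -> 'X_{1..n} * {set 'I_n}) : Prop :=
  [/\ forall i, squarefree_mon (D i).1 /\ mon_supp (D i).1 \subset (D i).2,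
      forall i (f : {mpoly K[n]}), in_subring (D i).2 f ->
        in_edge_ideal e ('X_[(D i).1] * f) -> f = 0,
      forall p : {mpoly K[n]}, exists fs : 'I_r -> {mpoly K[n]},
        (forall i, in_subring (D i).2 (fs i)) /\
        in_edge_ideal e (p - \sum_(i < r) 'X_[(D i).1] * fs i) &
      forall fs : 'I_r -> {mpoly K[n]},
        (forall i, in_subring (D i).2 (fs i)) ->
        in_edge_ideal e (\sum_(i < r) 'X_[(D i).1] * fs i) ->
        forall i, in_edge_ideal e ('X_[(D i).1] * fs i)].

Definition stanley_reg (n r : nat) (D : 'I_r -> 'X_{1..n} * {set 'I_n}) : nat :=
  (\max_(i < r) mdeg (D i).1)%N.

(* sreg(S/I(G)) <= k : the minimum over all squarefree Stanley decompositions
   of the Stanley regularity is at most k, i.e. some decomposition achieves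
   Stanley regularity <= k. *)
Definition sreg_le (K : fieldType) (n : nat) (e : rel 'I_n) (k : nat) : Prop :=
  exists (r : nat) (D : 'I_r -> 'X_{1..n} * {set 'I_n}),
    sqfree_stanley_decomp K e D /\ (stanley_reg D <= k)%N.

(* Main.v *)
Require Import Defs.
From HB Require Import structures.
From mathcomp Require Import all_boot all_order all_algebra.
From mathcomp Require Import mpoly.
From mathcomp Require Import zify.
Set Implicit Arguments. Unset Strict Implicit. Unset Printing Implicit Defensive.

Lemma modS_eq i m : i < m -> i.+1 %% m = (if i.+1 == m then 0 else i.+1).
Proof. by move=> h; case: eqP => [->|ne]; [rewrite modnn | rewrite modn_small; lia]. Qed.

Ltac bsolve := repeat (first [case: ifP => [/eqP ?|/negbT/eqP ?] | case: eqP => ?]); rewrite /=; try done; exfalso; lia.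

Section Graph.
Variables (T : finType) (H : rel T).
Hypotheses (Hsym : ssrbool.symmetric H) (Hirr : irreflexive H) (Hch : chordal H).

Section Path.
Variables (u v : T) (C : {set T}).

Definition okp (P : seq T) :=
  [/\ 0 < size P, nth u P 0 = u, nth u P (size P).-1 = v,
     (forall i, i.+1 < size P -> H (nth u P i) (nth u P i.+1)) &
     (forall i, 0 < i -> i.+1 < size P -> nth u P i \in C)].

Lemma nth_cut (P : seq T) a b k : a <= size P ->
  nth u (take a P ++ drop b P) k = if k < a then nth u P k else nth u P (b + (k - a)).
Proof.
move=> ha; rewrite nth_cat size_takel //; case: ifP => h.
  by rewrite nth_take.
by rewrite nth_drop.
Qed.

Lemma size_cut (P : seq T) a b : a <= size P ->
  size (take a P ++ drop b P) = a + (size P - b).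
Proof. by move=> ha; rewrite size_cat size_takel // size_drop. Qed.

Lemma okp_min k : forall P, size P <= k -> okp P -> exists P', [/\ okp P',
  (forall i j, i < j -> j < size P' -> nth u P' i != nth u P' j) &
  (forall i j, i.+1 < j -> j < size P' -> ~~ H (nth u P' i) (nth u P' j))].
Proof.
elim: k => [|k IH] P hk [h0 h1 h2 h3 h4].
  by move: h0; rewrite lt0n -leqn0 hk.
case: (boolP [exists i : 'I_(size P), exists j : 'I_(size P),
   (i < j) && (nth u P i == nth u P j)]).
  move=> /existsP [[i hi] /existsP [[j hj] /andP [/= lij /eqP eij]]].
  apply: (IH (take i P ++ drop j P)).
    rewrite size_cut; lia.
  have hs : size (take i P ++ drop j P) = i + (size P - j) by rewrite size_cut // ltnW.
  split.
  - rewrite hs; lia.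
  - rewrite nth_cut ?(ltnW hi) //; case: ifP => // /negbT; rewrite -leqNgt leqn0 => /eqP i0.
    by rewrite i0 in eij *; rewrite subn0 addn0 -eij.
  - rewrite hs nth_cut ?(ltnW hi) //; case: ifP => [|_]; first lia.
    rewrite -h2; congr nth; lia.
  - move=> l; rewrite hs => hl; rewrite !nth_cut ?(ltnW hi) //.
    case: (ltnP l.+1 i) => hl1.
      by rewrite (ltnW hl1); apply: h3; lia.
    case: (ltnP l i) => hl2.
      have -> : l.+1 = i by lia.
      rewrite subnn addn0 -eij; have <- : l.+1 = i by lia. apply: h3; lia.
    have -> : j + (l.+1 - i) = (j + (l - i)).+1 by lia.
    apply: h3; lia.
  - move=> l l0; rewrite hs => hl; rewrite nth_cut ?(ltnW hi) //.
    case: ifP => hl1; first by apply: h4 => //; lia.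
    apply: h4; lia.
move=> /existsPn hnd.
have hnd' : forall i j, i < j -> j < size P -> nth u P i != nth u P j.
  move=> i j lij hj; have := hnd (Ordinal (ltn_trans lij hj)).
  by move=> /existsPn /(_ (Ordinal hj)); rewrite /= lij.
case: (boolP [exists i : 'I_(size P), exists j : 'I_(size P),
   (i.+1 < j) && H (nth u P i) (nth u P j)]).
  move=> /existsP [[i hi] /existsP [[j hj] /andP [/= lij eij]]].
  apply: (IH (take i.+1 P ++ drop j P)).
    rewrite size_cut; lia.
  have hs : size (take i.+1 P ++ drop j P) = i.+1 + (size P - j) by rewrite size_cut.
  split.
  - rewrite hs; lia.
  - by rewrite nth_cut.
  - rewrite hs nth_cut //; case: ifP => [|_]; first lia.
    rewrite -h2; congr nth; lia.
  - move=> l; rewrite hs => hl; rewrite !nth_cut //.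
    case: (ltnP l.+1 i.+1) => hl1.
      by rewrite (ltnW hl1); apply: h3; lia.
    case: (ltnP l i.+1) => hl2.
      have -> : l = i by lia.
      by rewrite subnn addn0.
    have -> : j + (l.+1 - i.+1) = (j + (l - i.+1)).+1 by lia.
    apply: h3; lia.
  - move=> l l0; rewrite hs => hl; rewrite nth_cut //.
    case: ifP => hl1; first by apply: h4 => //; lia.
    apply: h4; lia.
move=> /existsPn hnc.
exists P; split => //.
move=> i j lij hj; have := hnc (Ordinal (ltn_trans (ltnW lij) hj)).
by move=> /existsPn /(_ (Ordinal hj)); rewrite /= lij.
Qed.


Lemma cyc_false x P : okp P ->
  (forall i j, i < j -> j < size P -> nth u P i != nth u P j) ->
  (forall i j, i.+1 < j -> j < size P -> ~~ H (nth u P i) (nth u P j)) ->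
  H x u -> H x v -> u != v -> ~~ H u v -> x \notin C ->
  (forall z, z \in C -> ~~ H x z) -> False.
Proof.
move=> [h0 h1 h2 h3 h4] hd hc hxu hxv nuv nHuv xC hxC.
have s3 : 2 < size P.
  case: P h0 h1 h2 h3 {hd hc h4} => [|a [|b [|c P]]] //= _.
    by move=> -> eq; rewrite eq eqxx in nuv.
  move=> -> -> /(_ 0 isT); by rewrite (negbTE nHuv).
have F1 : forall i, i < size P -> H x (nth u P i) = (i == 0) || (i.+1 == size P).
  move=> i hi; case: eqP => [->|n0]; first by rewrite h1 hxu.
  case: eqP => [e1|n1]; first by rewrite -e1 /= in h2; rewrite h2 hxv.
  apply/negbTE/hxC/h4; lia.
have F2 : forall i j, i < size P -> j < size P -> i != j ->
    H (nth u P i) (nth u P j) = (j == i.+1) || (i == j.+1).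
  move=> i j hi hj nij; case: (ltngtP i j) => lij; last by rewrite lij eqxx in nij.
    have -> : (i == j.+1) = false by apply/negbTE/eqP; lia.
    rewrite orbF; case: (boolP (j == i.+1)) => [/eqP ->|ne]; first by apply: h3; lia.
    apply/negbTE/hc => //; move/eqP: ne; lia.
  have -> : (j == i.+1) = false by apply/negbTE/eqP; lia.
  rewrite /= Hsym; case: (boolP (i == j.+1)) => [/eqP ->|ne]; first by apply: h3; lia.
  apply/negbTE/hc => //; move/eqP: ne; lia.
have Hs : induced_cycle H (x :: P).
  split.
  - apply/andP; split.
      apply/negP => /(nthP u) [i hi eq].
      have := F1 i hi; rewrite eq Hirr.
      case: (boolP (i == 0)) => [/eqP i0|n0] /=.
        by [].
      case: (boolP (i.+1 == size P)) => //= n1 _.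
      have i1 : i.+1 < size P by rewrite ltn_neqAle n1.
      by move: xC; rewrite -eq h4 //; lia.
    apply/(uniqP u) => i j; rewrite !inE => hi hj eq.
    case: (ltngtP i j) => // lij.
      by move: (hd i j lij hj); rewrite eq eqxx.
    by move: (hd j i lij hi); rewrite eq eqxx.
  - rewrite /=; lia.
  - move=> y0 i j hi hj nij; rewrite /= in hi hj; rewrite !(set_nth_default u y0) //.
    rewrite !modS_eq //.
    case: i hi nij => [|i] hi nij; case: j hj nij => [|j] hj nij //=.
    + rewrite F1 //. bsolve.
    + rewrite (Hsym _ x) F1 //. bsolve.
    + rewrite F2 //. bsolve.
by move: (Hch Hs) => /= [] e; rewrite e in s3.
Qed.

End Path.

Definition clique (K : {set T}) := forall a b, a \in K -> b \in K -> a != b -> H a b.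
Definition simplicial (W : {set T}) s :=
  forall a b, a \in W -> b \in W -> H s a -> H s b -> a != b -> H a b.

Lemma simp_exists k : forall W K : {set T}, #|W| <= k -> K \subset W -> clique K ->
  (exists y, (y \in W) && (y \notin K)) ->
  exists s, [/\ s \in W, s \notin K & simplicial W s].
Proof.
elim: k => [|k IH] W K hW hKW hK [y /andP [yW yK]].
  have : 0 < #|W| by apply/card_gt0P; exists y.
  by rewrite lt0n -leqn0 hW.
case: (boolP [exists x in W, (~~ [forall z in W, (z != x) ==> H x z]) &&
                    [forall z in K, (z == x) || H x z]]).
  move=> /existsP [x /andP [xW /andP [/forallPn [y0 hy0] /forall_inP KN]]].
  move: hy0; rewrite !negb_imply => /and3P [y0W y0x nHy0].
  pose A := [set z in W | (z != x) && ~~ H x z].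
  pose rA := [rel a b | [&& a \in A, b \in A & H a b]].
  pose C := [set z in A | connect rA y0 z].
  pose S := [set w in W | (w \notin C) && [exists z in C, H w z]].
  have y0A : y0 \in A by rewrite inE y0W y0x.
  have y0C : y0 \in C by rewrite inE y0A connect0.
  have CA : forall z, z \in C -> z \in A by move=> z; rewrite inE => /andP [].
  have AW : forall z, z \in A -> z \in W by move=> z; rewrite inE => /andP [].
  have Ccl : forall z w, z \in C -> w \in A -> H z w -> w \in C.
    move=> z w zC wA hzw; rewrite inE wA /=.
    move: zC; rewrite inE => /andP [zA cz].
    apply: (connect_trans cz); apply: connect1; by rewrite /= zA wA.
  have rAsym : connect_sym rA.
    apply: sym_connect_sym => a b /=; by rewrite Hsym andbCA.
  have connC : forall a b, a \in C -> connect rA a b -> b \in C.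
    move=> a b aC /connectP [p pth ->].
    elim: p a aC pth => [|c p IHp] a aC //= /andP [/and3P [_ cA hac] pth].
    by apply: (IHp c) => //; apply: (Ccl a).
  have SHx : forall w, w \in S -> H x w.
    move=> w; rewrite inE => /and3P [wW wC /existsP [z /andP [zC hwz]]].
    case: (boolP (w \in A)) => wA.
      by move: wC; rewrite (Ccl z w zC wA) // Hsym.
    move: wA; rewrite inE wW /= negb_and negbK => /orP [/eqP wx|] //.
    by move: (CA z zC); rewrite inE -wx hwz /= !andbF.
    by move/negPn.
  have xA : x \notin A by rewrite inE eqxx andbF.
  have xC : x \notin C by apply/negP => /CA; rewrite (negbTE xA).
  have hxC : forall z, z \in C -> ~~ H x z.
    by move=> z0 /CA; rewrite inE => /and3P [_ _].
  have Scl : clique S.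
    move=> a b aS bS nab; apply/negPn/negP => nHab.
    have := aS; rewrite inE => /and3P [_ aC /existsP [za /andP [zaC hza]]].
    have := bS; rewrite inE => /and3P [_ bC /existsP [zb /andP [zbC hzb]]].
    have cab : connect rA za zb.
      move: zaC zbC; rewrite !inE => /andP [_ c1] /andP [_ c2].
      by apply: connect_trans c2; rewrite rAsym.
    move/connectP: cab => [p pth lp].
    pose P := a :: za :: rcons p b.
    have hpth : path H a (za :: rcons p b).
      rewrite /= hza rcons_path -lp (Hsym zb) hzb andbT.
      by apply: sub_path pth => c d /and3P [].
    have inC : forall c, c \in za :: p -> c \in C.
      by move=> c /(path_connect pth) /(connC za) ->.
    have okP : okp a b C P.
      split.
      - by [].
      - by [].
      - rewrite /P /= size_rcons -rcons_cons nth_rcons /= ltnn eqxx //.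
      - move=> i hi; move/(pathP a): hpth => /(_ i); rewrite /P.
        by apply; move: hi; rewrite /= size_rcons.
      - move=> [|i] // _; rewrite /P /= size_rcons => hi.
        rewrite -rcons_cons nth_rcons /= (hi : i < (size p).+1); apply: inC; exact: mem_nth.
    have [P' [okP' hd hc]] := okp_min (leqnn (size P)) okP.
    by apply: (cyc_false okP' hd hc (SHx a aS) (SHx b bS) nab nHab xC hxC).
  pose W' := C :|: S.
  have W'W : W' \subset W.
    apply/subsetP => z; rewrite inE => /orP [/CA/AW //|]; by rewrite inE => /andP [].
  have xW' : x \notin W'.
    rewrite inE negb_or xC /=; apply/negP => /SHx; by rewrite Hirr.
  have cW' : #|W'| <= k.
    have : W' \proper W by rewrite properEneq W'W andbT; apply/eqP => e; rewrite e xW in xW'.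
    move/proper_card; lia.
  have ey : exists y, (y \in W') && (y \notin S).
    exists y0; rewrite in_setU y0C /=; apply/negP; rewrite in_set => /and3P [_ nC _]; by move: nC; rewrite inE y0A connect0.
  have [s [sW' sS simpS]] := IH W' S cW' (subsetUr _ _) Scl ey.
  have sC : s \in C by move: sW' sS; rewrite inE => /orP [] // ->.
  exists s; split.
  - by apply: AW; apply: CA.
  - apply/negP => /KN /orP [/eqP sx|hxs].
      by move: xC; rewrite -sx sC.
    by move: (hxC s sC); rewrite hxs.
  - have inW' : forall a, a \in W -> H s a -> a \in W'.
      move=> a aW hsa; rewrite inE; case: (boolP (a \in A)) => aA.
        by rewrite (Ccl s a sC aA hsa).
      apply/orP; right; rewrite inE aW.
      have -> : a \notin C by apply/negP => /CA; rewrite (negbTE aA).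
      by apply/existsP; exists s; rewrite sC Hsym.
    move=> a b aW bW hsa hsb nab.
    by apply: simpS => //; apply: inW'.
move=> /existsPn hB.
have univ : forall x, x \in W -> (forall z, z \in K -> (z == x) || H x z) ->
    forall z, z \in W -> z != x -> H x z.
  move=> x xW hKx z zW zx; move: (hB x); rewrite xW /= negb_and negbK => /orP [/forall_inP hu|].
    by move: (hu z zW); rewrite zx.
  by move=> /forall_inP; case; move=> z0 /hKx.
case: (set_0Vmem K) => [K0 | [k0 k0K]].
  exists y; split => // a b aW bW _ _ nab.
  apply: (univ a aW) => //; first by move=> z; rewrite K0 inE.
  by rewrite eq_sym.
have k0W : k0 \in W by apply: (subsetP hKW).
have hKk0 : forall z, z \in K -> (z == k0) || H k0 z.
  move=> z zK; case: (boolP (z == k0)) => //= nz; apply: hK => //; by rewrite eq_sym.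
have uk0 := univ k0 k0W hKk0.
have cW : #|W :\ k0| <= k by move: hW; rewrite (cardsD1 k0 W) k0W.
have sub' : K :\ k0 \subset W :\ k0 by apply: setSD.
have cl' : clique (K :\ k0).
  by move=> a b; rewrite !inE => /andP [_ aK] /andP [_ bK]; apply: hK.
have yk0 : y != k0 by apply/eqP => e; rewrite e k0K in yK.
have ey : exists y, (y \in W :\ k0) && (y \notin K :\ k0).
  by exists y; rewrite !inE yk0 yW /= (negbTE yK).
have [s [sW sK simpS]] := IH _ _ cW sub' cl' ey.
move: sW; rewrite !inE => /andP [sk0 sW].
exists s; split => //.
  by move: sK; rewrite !inE sk0.
move=> a b aW bW hsa hsb nab.
case: (boolP (a == k0)) => [/eqP ak|ak].
  by rewrite ak; apply: uk0 => //; rewrite -ak eq_sym.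
case: (boolP (b == k0)) => [/eqP bk|bk].
  by rewrite bk Hsym; apply: uk0 => //; rewrite -bk.
by apply: simpS; rewrite // !inE ?ak ?bk.
Qed.

Lemma peo k : forall W : {set T}, #|W| <= k -> exists s : seq T, [/\ uniq s, s =i W &
  forall v a b, v \in W -> a \in W -> b \in W -> H v a -> H v b ->
    index a s < index v s -> index b s < index v s -> a != b -> H a b].
Proof.
elim: k => [|k IH] W hW.
  have W0 : W = set0 by apply/cards0_eq; lia.
  by exists [::]; split => //; move=> z; rewrite W0 inE.
case: (set_0Vmem W) => [W0 | [y yW]].
  by exists [::]; split => //; move=> z; rewrite W0 inE.
have cl0 : clique set0 by move=> a b; rewrite inE.
have ey0 : exists y, (y \in W) && (y \notin set0) by exists y; rewrite inE yW.
have [s0 [s0W _ simp]] := @simp_exists #|W| W set0 (leqnn _) (sub0set _) cl0 ey0.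
have cW : #|W :\ s0| <= k by move: hW; rewrite (cardsD1 s0 W) s0W.
have [s [us sW hs]] := IH _ cW.
exists (rcons s s0); split.
- by rewrite rcons_uniq us sW !inE eqxx.
- by move=> z; rewrite mem_rcons in_cons sW !inE; case: eqP => // ->.
move=> v a b vW aW bW hva hvb; rewrite -!cats1 !index_cat.
have ix : forall z, z \in W -> z != s0 -> z \in s by move=> z zW zs; rewrite sW !inE zs.
have nx : forall z, z \in W -> z \notin s -> z = s0.
  by move=> z zW; apply: contraNeq => /(ix z zW).
have bad : forall z, size s + index z [:: s0] < size s + 0 -> False.
  by move=> z; rewrite addn0 ltnNge leq_addr.
case: (boolP (v \in s)) => vs; last first.
  have ev := nx v vW vs.
  have -> : index v [:: s0] = 0 by rewrite ev /= eqxx.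
  case: (boolP (a \in s)) => as_; last by move/bad.
  case: (boolP (b \in s)) => bs; last by move=> _ /bad.
  move=> _ _ nab; apply: (simp a b aW bW _ _ nab); by rewrite -ev.
have lt := index_mem v s; rewrite vs in lt.
have bad2 : forall z, size s + index z [:: s0] < index v s -> False.
  by move=> z h; move: (leq_ltn_trans (leq_addr _ _) h); rewrite ltnNge (ltnW lt).
case: (boolP (a \in s)) => as_; last by move/bad2.
case: (boolP (b \in s)) => bs; last by move=> _ /bad2.
move=> ia ib nab.
have inS : forall z, z \in s -> z \in W :\ s0 by move=> z; rewrite sW.
by apply: (hs v a b) => //; apply: inS.
Qed.

End Graph.
Import GRing.Theory.
Local Open Scope ring_scope.

Section Alg.
Variables (K : fieldType) (n : nat) (e : rel 'I_n).
Hypotheses (esym : ssrbool.symmetric e) (eirr : irreflexive e).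

Definition indep (m : 'X_{1..n}) :=
  [forall a, forall b, ((m a != 0%N) && (m b != 0%N)) ==> ~~ e a b].

Lemma coefXM (u : 'X_{1..n}) (f : {mpoly K[n]}) M :
  ('X_[u] * f)@_M = if (u <= M)%MM then f@_(M - u)%MM else 0.
Proof.
rewrite mulrC; case: ifP => h.
  by rewrite -{1}(submK h) addmC mcoeffMX.
apply/eqP; rewrite mcoeff_eq0; apply/negP.
rewrite (perm_mem (msuppMX f u)) => /mapP [m' _ eM].
by rewrite eM lem_addr in h.
Qed.

Lemma mcoeff_sumL (I : Type) (r : seq I) (P : pred I) (F : I -> {mpoly K[n]}) M :
  (\sum_(i <- r | P i) F i)@_M = \sum_(i <- r | P i) (F i)@_M.
Proof. exact: raddf_sum. Qed.

Lemma ei0 : in_edge_ideal e (0 : {mpoly K[n]}).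
Proof. by exists [::]; rewrite big_nil. Qed.

Lemma eiD p q : in_edge_ideal e p -> in_edge_ideal e q -> in_edge_ideal e (p + q :> {mpoly K[n]}).
Proof.
move=> [s1 [h1 ->]] [s2 [h2 ->]]; exists (s1 ++ s2).
by rewrite all_cat h1 h2 big_cat.
Qed.

Lemma lepm_U2 (a b : 'I_n) (m : 'X_{1..n}) : a != b -> m a != 0%N -> m b != 0%N ->
  (U_(a) + U_(b) <= m)%MM.
Proof.
move=> nab ha hb; apply/mnm_lepP => i; rewrite mnmDE !mnm1E.
case: (eqVneq a i) => [ai|nai]; case: (eqVneq b i) => [bi|nbi] /=.
- by move: nab; rewrite ai bi eqxx.
- by rewrite -ai lt0n.
- by rewrite -bi lt0n.
- by [].
Qed.

Lemma ei_char (p : {mpoly K[n]}) :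
  in_edge_ideal e p <-> forall M, indep M -> p@_M = 0.
Proof.
split.
  move=> [s [hs ->]] M hM; rewrite mcoeff_sumL big1_seq // => t /andP [_ ts].
  have het := allP hs t ts.
  rewrite -mpolyXD mulrC coefXM; case: ifP => // /mnm_lepP h.
  have h1 := h t.1.1; have h2 := h t.1.2.
  rewrite !mnmDE !mnm1E eqxx /= in h1 h2; rewrite addnC /= in h2.
  move/forallP: hM => /(_ t.1.1) /forallP /(_ t.1.2).
  rewrite -!lt0n (leq_trans _ h1) ?(leq_trans _ h2) ?leq_addr ?leq_addl //=; first by rewrite het.
  by rewrite eqxx.
move=> h; rewrite (mpolyE p); rewrite big_seq.
apply: (big_ind (in_edge_ideal e)); [exact: ei0 | exact: eiD |].
move=> m; rewrite mcoeff_msupp => hm.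
case: (boolP (indep m)) => im; first by rewrite h // eqxx in hm.
move/forallPn: im => [a /forallPn [b]]; rewrite negb_imply negbK => /andP [/andP [ha hb] eab].
have nab : a != b by apply/eqP => ab; rewrite ab eirr in eab.
exists [:: (a, b, p@_m *: 'X_[m - (U_(a) + U_(b))])]; split; first by rewrite /= eab.
rewrite big_seq1 /= -scalerAl -!mpolyXD submK //; exact: lepm_U2.
Qed.


Lemma in_supp (M : 'X_{1..n}) i : (i \in mon_supp M) = (M i != 0%N).
Proof. by rewrite inE. Qed.

Lemma in_subringP Z (f : {mpoly K[n]}) N : in_subring Z f -> f@_N != 0 -> mon_supp N \subset Z.
Proof. by move=> /allP h hN; apply: h; rewrite mcoeff_msupp. Qed.

Lemma sum_ind (r : seq 'X_{1..n}) (P : pred 'X_{1..n}) (c : 'X_{1..n} -> K) x :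
  uniq r -> \sum_(m <- r | P m) c m * (m == x)%:R = if P x && (x \in r) then c x else 0.
Proof.
elim: r => [|y r IH] /=; first by rewrite big_nil andbF.
move=> /andP [yr ur]; rewrite big_cons IH // in_cons.
case: (eqVneq y x) => [<-|nyx] /=.
  by rewrite (negbTE yr) andbF addr0 mulr1; case: (P y).
by rewrite mulr0 add0r; case: (P y).
Qed.

Variables (rank : 'I_n -> nat).
Hypotheses (hrank : injective rank)
  (hpeo : forall v a b, compl_graph e v a -> compl_graph e v b ->
     (rank a < rank v)%N -> (rank b < rank v)%N -> a != b -> compl_graph e a b).

Definition Zv v : {set 'I_n} := [set w | (w == v) || (compl_graph e v w && (rank w < rank v)%N)].

Lemma Zindep v a b : a \in Zv v -> b \in Zv v -> ~~ e a b.
Proof.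
rewrite !inE => /orP [/eqP ->|/andP [hva ra]] /orP [/eqP ->|/andP [hvb rb]].
- by rewrite eirr.
- by move: hvb; rewrite /compl_graph => /andP [].
- by rewrite esym; move: hva; rewrite /compl_graph => /andP [].
- case: (eqVneq a b) => [->|nab]; first by rewrite eirr.
  by have := hpeo hva hvb ra rb nab; rewrite /compl_graph => /andP [].
Qed.

Definition uD (o : option 'I_n) : 'X_{1..n} := if o is Some v then U_(v)%MM else 0%MM.
Definition zD (o : option 'I_n) : {set 'I_n} := if o is Some v then Zv v else set0.
Definition inC o (M : 'X_{1..n}) := (uD o <= M)%MM && (mon_supp M \subset zD o).

Lemma U_le v (M : 'X_{1..n}) : (U_(v) <= M)%MM = (M v != 0%N).
Proof.
apply/mnm_lepP/idP => [/(_ v)|hv i]; first by rewrite mnm1E eqxx lt0n.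
by rewrite mnm1E; case: eqVneq => [<-|] //; rewrite lt0n.
Qed.

Lemma inC_unique o1 o2 M : inC o1 M -> inC o2 M -> o1 = o2.
Proof.
have key : forall v o, inC (Some v) M -> inC o M -> o = Some v \/ (exists w, o = Some w /\ v \in Zv w /\ w \in Zv v /\ v != w).
  move=> v [w|] /andP [/= hv /subsetP hs] /andP [/= hw /subsetP hs'].
    case: (eqVneq v w) => [->|nvw]; [by left | right].
    exists w; split => //; split.
      by apply: hs'; rewrite inE -U_le.
    by split => //; apply: hs; rewrite inE -U_le.
  by move: (hs' v); rewrite !inE -U_le hv => /(_ isT).
case: o1 => [v|] h1 h2.
  case: (key v o2 h1 h2) => [-> //|[w [-> [vw [wv nvw]]]]].
  move: vw wv; rewrite !inE (negbTE nvw) eq_sym (negbTE nvw) /= => /andP [_ r1] /andP [_ r2].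
  by move: (ltn_trans r1 r2); rewrite ltnn.
case: o2 h2 => [w|] h2 //.
case: (key w None h2 h1) => [//|[? [//]]].
Qed.

Lemma inC_indep o M : inC o M -> indep M.
Proof.
case: o => [v|] /andP [_ /subsetP hs]; apply/forallP => a; apply/forallP => b;
  apply/implyP => /andP [ha hb].
  by apply: (Zindep (v := v)); apply: hs; rewrite inE.
by move: (hs a); rewrite !inE ha => /(_ isT).
Qed.

Lemma inC_exists M : indep M -> exists o, inC o M.
Proof.
move=> hM; case: (set_0Vmem (mon_supp M)) => [S0|[v0 hv0]].
  by exists None; rewrite /inC /= S0 sub0set andbT; apply/mnm_lepP => i; rewrite mnm0E.
have [v vS vmax] := @arg_maxnP _ v0 (mem (mon_supp M)) rank hv0.
have vS1 : M v != 0%N by rewrite -in_supp.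
exists (Some v); rewrite /inC /= U_le vS1 /=.
apply/subsetP => w wS; rewrite inE; case: (eqVneq w v) => //= nwv.
have wS1 : M w != 0%N by rewrite -in_supp.
have rlt : (rank w < rank v)%N.
  have hle : (rank w <= rank v)%N := vmax w wS.
  rewrite ltn_neqAle hle andbT; apply/eqP => rw.
  by rewrite (hrank rw) eqxx in nwv.
rewrite rlt.
rewrite andbT /compl_graph eq_sym nwv /=.
move/forallP: hM => /(_ v) /forallP /(_ w) /implyP; apply.
by rewrite vS1 wS1.
Qed.

Definition fsum o (p : {mpoly K[n]}) := \sum_(m <- msupp p | inC o m) p@_m *: 'X_[m - uD o].

Lemma coef_fsum o (p : {mpoly K[n]}) N : (fsum o p)@_N = if inC o (N + uD o) then p@_(N + uD o) else 0.
Proof.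
rewrite mcoeff_sumL.
transitivity (\sum_(m <- msupp p | inC o m) p@_m * (m == (N + uD o)%MM)%:R).
  apply: eq_bigr => m /andP [hu _]; rewrite mcoeffZ mcoeffX.
  have -> : ((m - uD o)%MM == N) = (m == (N + uD o)%MM) by
    apply/idP/idP => /eqP h; apply/eqP; [by rewrite -h submK | by rewrite h addmK].
  by [].
rewrite sum_ind ?msupp_uniq //; case: (inC o _) => //=.
case: (boolP (_ \in msupp p)) => //; rewrite mcoeff_msupp negbK => /eqP ->.
by [].
Qed.

Lemma coef_XF o (p : {mpoly K[n]}) M : ('X_[uD o] * fsum o p)@_M = if inC o M then p@_M else 0.
Proof.
rewrite coefXM; case: ifP => hu; first by rewrite coef_fsum submK.
by rewrite /inC hu.
Qed.

Lemma usub o : mon_supp (uD o) \subset zD o.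
Proof.
apply/subsetP => i; rewrite in_supp; case: o => [v|] /=.
  by rewrite mnm1E; case: (eqVneq v i) => [<-|] // _; rewrite inE eqxx.
by rewrite mnm0E.
Qed.

Lemma coefXM_inC o (f : {mpoly K[n]}) M : in_subring (zD o) f -> ('X_[uD o] * f)@_M != 0 -> inC o M.
Proof.
rewrite coefXM; case: ifP => hu; last by rewrite eqxx.
move=> hf /(in_subringP hf) hs; rewrite /inC hu /=.
apply/subsetP => i; rewrite in_supp -(submK hu) mnmDE addn_eq0 negb_and => /orP [h|h].
  by apply: (subsetP hs); rewrite in_supp.
by apply: (subsetP (usub o)); rewrite in_supp.
Qed.

Lemma subring_fsum o (p : {mpoly K[n]}) : in_subring (zD o) (fsum o p).
Proof.
apply/allP => N; rewrite mcoeff_msupp coef_fsum; case: ifP => [/andP [_ hs] _|]; last by rewrite eqxx.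
apply/subsetP => i; rewrite in_supp => hi; apply: (subsetP hs).
by rewrite in_supp mnmDE addn_eq0 negb_and hi.
Qed.

Lemma unlift_surj o : exists i : 'I_n.+1, unlift ord0 i = o.
Proof.
case: o => [v|]; first by exists (lift ord0 v); rewrite liftK.
by exists ord0; rewrite unlift_none.
Qed.

Lemma unlift_inj (i j : 'I_n.+1) : unlift ord0 i = unlift ord0 j -> i = j.
Proof.
case: (unliftP ord0 i) => [v ->|->]; case: (unliftP ord0 j) => [w ->|->];
  rewrite ?liftK ?unlift_none // => [[->]] //.
Qed.

Definition Dd (i : 'I_n.+1) := (uD (unlift ord0 i), zD (unlift ord0 i)).

Lemma Dd_decomp : sqfree_stanley_decomp K e Dd /\ (stanley_reg Dd <= 1)%N.
Proof.
split; last first.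
  rewrite /stanley_reg; apply/bigmax_leqP => i _ /=.
  by case: (unlift ord0 i) => [v|] /=; rewrite ?mdeg1 ?mdeg0.
split.
- move=> i /=; split; last exact: usub.
  apply/forallP => j; case: (unlift ord0 i) => [v|] /=; first by rewrite mnm1E; case: eqP.
  by rewrite mnm0E.
- move=> i f /= hf hI; apply/mpolyP => N; rewrite mcoeff0; apply/eqP; apply: contraT => hN.
  have hM : ('X_[uD (unlift ord0 i)] * f)@_(N + uD (unlift ord0 i)) != 0.
    by rewrite coefXM lem_addl addmK.
  have := (ei_char _).1 hI _ (inC_indep (coefXM_inC hf hM)).
  by move/eqP; rewrite (negbTE hM).
- move=> p; exists (fun i => fsum (unlift ord0 i) p); split; first by move=> i; exact: subring_fsum.
  apply/ei_char => M hM; rewrite mcoeffB mcoeff_sumL.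
  under eq_bigr do rewrite coef_XF.
  have [o ho] := inC_exists hM; have [i0 hi0] := unlift_surj o.
  rewrite (bigD1 i0) //= hi0 ho big1 ?addr0 ?subrr // => j nj.
  case: ifP => // hj; have := inC_unique hj ho; rewrite -hi0 => /unlift_inj ej.
  by rewrite ej eqxx in nj.
- move=> fs hfs hI i /=.
  suff -> : fs i = 0 by rewrite mulr0; exact: ei0.
  apply/mpolyP => N; rewrite mcoeff0; apply/eqP; apply: contraT => hN.
  have hM : ('X_[uD (unlift ord0 i)] * fs i)@_(N + uD (unlift ord0 i)) != 0.
    by rewrite coefXM lem_addl addmK.
  have hC := coefXM_inC (hfs i) hM.
  have := (ei_char _).1 hI _ (inC_indep hC).
  rewrite mcoeff_sumL (bigD1 i) //= big1 ?addr0; first by move/eqP; rewrite (negbTE hM).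
  move=> j nj; apply/eqP; apply: contraT => hj; have := inC_unique (coefXM_inC (hfs j) hj) hC.
  by move/unlift_inj => ej; rewrite ej eqxx in nj.
Qed.

End Alg.

Theorem theorem5p5 (K : fieldType) (n : nat) (e : rel 'I_n) :
  simple_graph e -> cochordal e -> (exists x y, e x y) ->
  sreg_le K e 1.
Proof.
move=> [esym eirr] hch _.
have Hsym : ssrbool.symmetric (compl_graph e).
  by move=> a b; rewrite /compl_graph eq_sym esym.
have Hirr : irreflexive (compl_graph e) by move=> a; rewrite /compl_graph eqxx.
have [s [us sW hs]] := peo Hsym Hirr hch (leqnn #|[set: 'I_n]|).
have sin : forall a, a \in s by move=> a; rewrite sW inE.
have hrank : injective (fun v => index v s).
  by move=> a b /= eab; rewrite -(nth_index a (sin a)) eab nth_index.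
have hpeo : forall v a b, compl_graph e v a -> compl_graph e v b ->
    (index a s < index v s)%N -> (index b s < index v s)%N -> a != b -> compl_graph e a b.
  by move=> v a b; apply: hs; rewrite inE.
exists n.+1, (Dd e (fun v => index v s)).
exact: Dd_decomp.
Qed.
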